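(* In the Jolteon protocol described in the context, for every two globally direct-committed blocks $B,B'$, either $B\longleftarrow^* B'$ or $B'\longleftarrow^* B$.
   Context: Jolteon protocol. There are $n=3f+1$ replicas, at most $f$ Byzantine, the rest honest; reliable authenticated channels; ideal threshold signatures in which $2f+1$ shares on the same message from distinct replicas combine into a threshold signature. A block is $B=(id,qc,tc,r,v,txn)$, with $qc$ a quorum certificate of its parent, $tc$ a timeout certificate or $\bot$, round $r$, view $v=0$, transactions $txn$, and $id$ a collision-resistant hash of the contents. A quorum certificate (QC) for $B$ is a threshold signature on $(B.id,B.r,B.v)$ from $2f+1$ shares (votes); $qc.r=B.r$; $B$ is certified if a QC for it exists; a genesis block of round $0$ has a QC. QCs are compared by round. Notation: $B_i\longleftarrow QC_i\longleftarrow B_{i+1}$ means $QC_i$ certifies $B_i$ and is contained in $B_{i+1}$; $B\longleftarrow^* B'$ ($B'$ extends $B$) means there is such a sequence (possibly of length zero) from $B$ to $B'$. A timeout message for round $r$ is a share on $r$ with the sender's $qc_{high}$; a timeout certificate (TC) for round $r$ is a threshold signature on $r$ from $2f+1$ timeout messages together with their $2f+1$ $qc_{high}$'s (all of round $<r$). Each round $r$ has a leader $L_r$ (round robin). Each replica keeps $r_{vote}=0$, $r_{cur}=1$, $qc_{high}$ = genesis QC. Propose: upon entering round $r$, $L_r$ multicasts $B=(id,qc_{high},tc,r,0,txn)$, with $tc$ the round-$(r-1)$ TC if $L_r$ entered round $r$ by receiving it, else $\bot$. Vote: upon the first valid proposal $B=(id,qc,tc,r,v,txn)$ from $L_r$,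 execute Advance Round, Lock, Commit; then if $r=r_{cur}$, $v=v_{cur}=0$, $r>r_{vote}$, and either $r=qc.r+1$ or ($r=tc.r+1$ and $qc.r\ge\max\{q.r: q$ a $qc_{high}$ in $tc\}$), send a share on $(id,r,v)$ to $L_{r+1}$ and set $r_{vote}\gets r$. Lock: upon seeing a valid QC $qc$ (formed from votes or contained in a proposal, timeout message or TC), set $qc_{high}\gets\max(qc_{high},qc)$. Commit: whenever there are two certified blocks $B,B'$ with $B'.qc$ certifying $B$ and $B'.r=B.r+1$, commit $B$ and all its ancestors. Advance Round: set $r_{cur}\gets\max(r_{cur},r)$ upon receiving or forming a round-$(r-1)$ QC or TC. Timer: upon entering round $r$, send the round-$(r-1)$ TC to $L_r$ if held and reset a timer; on expiry stop voting in round $r_{cur}$ and multicast a timeout message; upon a valid timeout message or TC execute Advance Round, Lock, Commit; upon $2f+1$ timeout messages form a TC. Definition: a block $B$ is globally direct-committed if $f+1$ honest replicas each successfully perform the Vote step on a proposal of a block $B'$ in round $B.r+1$ such that $B'.qc$ certifies $B$ (these Vote calls invoke Lock, setting $qc_{high}\gets B'.qc$, and produce $f+1$ matching votes). *)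

(* Defs.v *)
From mathcomp Require Import all_boot.
From Stdlib Require List.

Set Implicit Arguments.
Unset Strict Implicit.
Unset Printing Implicit Defensive.

Section Jolteon.

Variable f : nat.     (* at most f Byzantine replicas *)
Variable Txn : Type.

Definition nrep := (3 * f).+1.
Notation replica := 'I_nrep.

(* Blocks B = (id, qc, tc, r, v, txn).  The id is an ideal (injective)
   collision-resistant hash of the contents, so a block is identified with its
   contents; the qc field of a block is represented by the block it certifies
   (a QC is a threshold signature on (B.id, B.r, B.v), so it determines B and
   qc.r = B.r).  A TC for round r is represented by r together with the 2f+1
   timeout messages it was built from: (sender, sender's qc_high). *)
Inductive block : Type :=
| Genesis
| Blk of block & option tcert & nat & nat & Txn   (* qc, tc, r, v, txn *)
with tcert : Type :=
| TC of nat & seq (replica * block).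

Definition bround (b : block) : nat :=
  match b with Genesis => 0 | Blk _ _ r _ _ => r end.
Definition tcround (t : tcert) : nat := let: TC r _ := t in r.
Definition tchighs (t : tcert) : seq (replica * block) := let: TC _ hs := t in hs.
Definition max_high_round (t : tcert) : nat :=
  foldr maxn 0 (map (fun p => bround p.2) (tchighs t)).

Inductive extends (B : block) : block -> Prop :=
| ext_refl : extends B B
| ext_step p tc r v txn : extends B p -> extends B (Blk p tc r v txn).

(* Messages sent by honest replicas (signed; authenticated channels). *)
Inductive msg : Type :=
| MProposal of block
| MVote of block                (* share on (B.id, B.r, B.v), sent to L_{r+1} *)
| MTimeout of nat & block.      (* share on r, with sender's qc_high *)

Definition leader (r : nat) : replica := inord (r %% nrep).

Record lstate := LState {
  r_vote : nat;
  r_cur : nat;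
  qc_high : block;
  entered_tc : option tcert;  (* round-(r_cur-1) TC if r_cur was entered via it *)
  r_stop : nat;               (* last round in which the timer expired (voting stopped) *)
  r_prop : nat;               (* last round in which this replica proposed as leader *)
  seen : nat -> bool          (* rounds for which a valid proposal was already processed *)
}.

Definition init_lstate : lstate := LState 0 1 Genesis None 0 0 (fun _ => false).

Record gstate := GState {
  lst : replica -> lstate;
  log : seq (replica * msg)   (* all messages ever sent by honest replicas *)
}.

Definition init_gstate : gstate := GState (fun _ => init_lstate) [::].

Variable honest : {set replica}.

(* Ideal threshold signatures: Byzantine replicas can produce shares on
   anything; honest replicas only the shares they actually sent. *)
Definition has_vote_share (lg : seq (replica * msg)) (i : replica) (b : block) : Prop :=
  i \notin honest \/ List.In (i, MVote b) lg.

Definition valid_qc (lg : seq (replica * msg)) (b : block) : Prop :=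
  b = Genesis \/
  exists S : {set replica}, 2 * f + 1 <= #|S| /\
    forall i, i \in S -> has_vote_share lg i b.

Definition valid_tc (lg : seq (replica * msg)) (t : tcert) : Prop :=
  let: TC r hs := t in
  size hs = 2 * f + 1 /\ uniq (map fst hs) /\
  forall j q, List.In (j, q) hs ->
    [/\ valid_qc lg q, bround q < r &
        (j \notin honest \/ List.In (j, MTimeout r q) lg)].

Definition valid_proposal (lg : seq (replica * msg)) (B : block) : Prop :=
  match B with
  | Genesis => False
  | Blk p otc _ _ _ =>
      valid_qc lg p /\ (forall t, otc = Some t -> valid_tc lg t)
  end.

Definition maxqc (a b : block) : block := if bround a < bround b then b else a.

Definition see_qc (s : lstate) (b : block) : lstate :=
  LState (r_vote s) (maxn (r_cur s) (bround b).+1) (maxqc (qc_high s) b)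
         (if r_cur s < (bround b).+1 then None else entered_tc s)
         (r_stop s) (r_prop s) (seen s).

Definition see_tc (s : lstate) (t : tcert) : lstate :=
  LState (r_vote s) (maxn (r_cur s) (tcround t).+1)
         (foldl (fun acc p => maxqc acc p.2) (qc_high s) (tchighs t))
         (if r_cur s < (tcround t).+1 then Some t else entered_tc s)
         (r_stop s) (r_prop s) (seen s).

Definition proc_prop (s : lstate) (B : block) : lstate :=
  match B with
  | Genesis => s
  | Blk p otc r _ _ =>
      let s1 := see_qc s p in
      let s2 := match otc with Some t => see_tc s1 t | None => s1 end in
      LState (r_vote s2) (r_cur s2) (qc_high s2) (entered_tc s2) (r_stop s2)
             (r_prop s2) (fun k => (k == r) || seen s2 k)
  end.

Definition vote_ok (s : lstate) (B : block) : Prop :=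
  match B with
  | Genesis => False
  | Blk p otc r v _ =>
      [/\ r = r_cur s, v = 0, r_vote s < r, r_stop s < r &
          (r = (bround p).+1 \/
           exists t, [/\ otc = Some t, r = (tcround t).+1 &
                        max_high_round t <= bround p])]
  end.

Definition set_vote (s : lstate) (r : nat) : lstate :=
  LState r (r_cur s) (qc_high s) (entered_tc s) (r_stop s) (r_prop s) (seen s).
Definition set_stop (s : lstate) : lstate :=
  LState (r_vote s) (r_cur s) (qc_high s) (entered_tc s) (r_cur s) (r_prop s) (seen s).
Definition set_prop (s : lstate) : lstate :=
  LState (r_vote s) (r_cur s) (qc_high s) (entered_tc s) (r_stop s) (r_cur s) (seen s).

Definition upd (g : replica -> lstate) (i : replica) (s : lstate) : replica -> lstate :=
  fun j => if j == i then s else g j.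

(* Byzantine replicas take no explicit steps:
   their behaviour is captured by the shares they may contribute to certificates
   and by the arbitrary (validly certified) proposals of Byzantine leaders. *)
Inductive step : gstate -> gstate -> Prop :=
| StepQC g lg i b :
    i \in honest -> valid_qc lg b ->
    step (GState g lg) (GState (upd g i (see_qc (g i) b)) lg)
| StepTC g lg i t :
    i \in honest -> valid_tc lg t ->
    step (GState g lg) (GState (upd g i (see_tc (g i) t)) lg)
| StepTimeout g lg i :
    i \in honest -> r_stop (g i) < r_cur (g i) ->
    step (GState g lg)
         (GState (upd g i (set_stop (g i)))
                 ((i, MTimeout (r_cur (g i)) (qc_high (g i))) :: lg))
| StepPropose g lg i txn :
    i \in honest -> i = leader (r_cur (g i)) -> r_prop (g i) < r_cur (g i) ->
    step (GState g lg)
         (GState (upd g i (set_prop (g i)))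
                 ((i, MProposal (Blk (qc_high (g i)) (entered_tc (g i))
                                     (r_cur (g i)) 0 txn)) :: lg))
| StepRecvVote g lg i B :
    i \in honest ->
    (leader (bround B) \in honest -> List.In (leader (bround B), MProposal B) lg) ->
    valid_proposal lg B -> ~~ seen (g i) (bround B) ->
    vote_ok (proc_prop (g i) B) B ->
    step (GState g lg)
         (GState (upd g i (set_vote (proc_prop (g i) B) (bround B)))
                 ((i, MVote B) :: lg))
| StepRecvNoVote g lg i B :
    i \in honest ->
    (leader (bround B) \in honest -> List.In (leader (bround B), MProposal B) lg) ->
    valid_proposal lg B -> ~~ seen (g i) (bround B) ->
    ~ vote_ok (proc_prop (g i) B) B ->
    step (GState g lg) (GState (upd g i (proc_prop (g i) B)) lg).

Inductive reachable : gstate -> Prop :=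
| reach_init : reachable init_gstate
| reach_step gs gs' : reachable gs -> step gs gs' -> reachable gs'.

Definition globally_direct_committed (gs : gstate) (B : block) : Prop :=
  exists (tc : option tcert) (v : nat) (txn : Txn) (S : {set replica}),
    [/\ f + 1 <= #|S|, S \subset honest &
        forall i, i \in S ->
          List.In (i, MVote (Blk B tc (bround B).+1 v txn)) (log gs)].

End Jolteon.

(* Main.v *)
Require Import Defs.
From mathcomp Require Import all_boot zify.
From Stdlib Require List.
Set Implicit Arguments.
Unset Strict Implicit.
Unset Printing Implicit Defensive.

Section Pf.
Variable f : nat.
Variable Txn : Type.
Variable honest : {set 'I_(nrep f)}.
Local Notation replica := 'I_(nrep f).
Local Notation block := (block f Txn).
Local Notation lstate := (lstate f Txn).
Local Notation msg := (msg f Txn).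
Local Notation tcert := (tcert f Txn).
Local Notation LG := (seq (replica * msg)).

Lemma meet (A B C : {set replica}) : #|C| + nrep f < #|A| + #|B| ->
  exists x, [/\ x \in A, x \in B & x \notin C].
Proof.
move=> H.
have H1 := cardsUI A B.
have H2 : #|A :|: B| <= nrep f by rewrite -[X in _ <= X]card_ord; apply: max_card.
have H3 := cardsD (A :&: B) C.
have H4 : #|A :&: B :&: C| <= #|C| by apply: subset_leq_card; apply: subsetIr.
have : 0 < #|A :&: B :\: C| by lia.
rewrite card_gt0 => /set0Pn [x]. rewrite !inE => /and3P [? ? ?].
by exists x.
Qed.

Definition sub (lg lg' : LG) := forall x, List.In x lg -> List.In x lg'.

Lemma valid_qc_sub lg lg' b : sub lg lg' -> valid_qc honest lg b -> valid_qc honest lg' b.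
Proof.
move=> Hs [->|[S [HS HH]]]; [by left|right; exists S; split=> // i /HH [?|?]].
by left. by right; apply: Hs.
Qed.

Lemma valid_tc_sub lg lg' t : sub lg lg' -> valid_tc honest lg t -> valid_tc honest lg' t.
Proof.
move=> Hs; case: t => r hs [H1 [H2 H3]]; split=> //; split=> // j q /H3 [? ? [?|?]].
by split=> //; [apply: valid_qc_sub Hs _|left].
by split=> //; [apply: valid_qc_sub Hs _|right; apply: Hs].
Qed.

Lemma valid_prop_sub lg lg' b : sub lg lg' -> valid_proposal honest lg b -> valid_proposal honest lg' b.
Proof.
move=> Hs; case: b => // p o r v t [H1 H2]; split; first by apply: valid_qc_sub Hs _.
by move=> t0 /H2; apply: valid_tc_sub.
Qed.

Lemma maxqcE (a b : block) : bround (maxqc a b) = maxn (bround a) (bround b).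
Proof. by rewrite /maxqc /maxn; case: ifP. Qed.

Lemma foldl_ge (l : seq (replica * block)) (acc : block) :
  bround acc <= bround (foldl (fun acc p => maxqc acc p.2) acc l).
Proof.
elim: l acc => //= x l IH acc; apply: leq_trans (IH _); rewrite maxqcE; exact: leq_maxl.
Qed.

Definition mono (s s' : lstate) := [/\ r_vote s <= r_vote s',
  bround (qc_high s) <= bround (qc_high s') & r_stop s <= r_stop s'].

Lemma mono_refl (s : lstate) : mono s s. Proof. by split. Qed.

Lemma mono_see_qc (s : lstate) b : mono s (see_qc s b).
Proof. split=> //=; rewrite maxqcE; exact: leq_maxl. Qed.

Lemma mono_see_tc (s : lstate) t : mono s (see_tc s t).
Proof. split=> //=; exact: foldl_ge. Qed.

Lemma mono_trans (s1 s2 s3 : lstate) : mono s1 s2 -> mono s2 s3 -> mono s1 s3.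
Proof. by move=> [? ? ?] [? ? ?]; split; lia. Qed.

Lemma mono_proc (s : lstate) B : mono s (proc_prop s B).
Proof.
case: B => [|p o r v t] /=; first exact: mono_refl.
have H := mono_see_qc s p.
case: o => [t0|]; last by case: H => ? ? ?; split.
have H' := mono_trans H (mono_see_tc _ t0). by case: H' => ? ? ?; split.
Qed.

Lemma proc_facts (s : lstate) p o r v t :
  [/\ r_vote (proc_prop s (Blk p o r v t)) = r_vote s, r_stop (proc_prop s (Blk p o r v t)) = r_stop s,
      (bround p).+1 <= r_cur (proc_prop s (Blk p o r v t)) &
      bround p <= bround (qc_high (proc_prop s (Blk p o r v t)))].
Proof.
rewrite /=; case: o => [t0|] /=; split=> //.
- apply: leq_trans (leq_maxr _ _) (leq_maxl _ _).
- apply: leq_trans (foldl_ge _ _); rewrite maxqcE; exact: leq_maxr.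
- exact: leq_maxr.
- rewrite maxqcE; exact: leq_maxr.
Qed.


Definition vote_facts (lg : LG) (s : lstate) (b : block) : Prop :=
  match b with
  | Genesis => False
  | Blk p otc k v txn =>
    [/\ valid_proposal honest lg b, k <= r_vote s, bround p < k,
        bround p <= bround (qc_high s) &
        (k = (bround p).+1 \/ exists t, [/\ otc = Some t, k = (tcround t).+1 &
                                           max_high_round t <= bround p])]
  end.

Definition inv_i (lg : LG) (i : replica) (s : lstate) : Prop :=
 [/\ forall b, List.In (i, MVote b) lg -> vote_facts lg s b,
     forall b1 b2, List.In (i, MVote b1) lg -> List.In (i, MVote b2) lg ->
        bround b1 = bround b2 -> b1 = b2,
     forall m q, List.In (i, MTimeout m q) lg -> m <= r_stop s &
     forall p otc k v txn m q, List.In (i, MVote (Blk p otc k v txn)) lg ->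
        List.In (i, MTimeout m q) lg -> k <= m -> bround p <= bround q].

Definition Inv (gs : gstate f Txn) := forall i, i \in honest -> inv_i (log gs) i (lst gs i).

Lemma vote_facts_mono lg lg' s s' b : sub lg lg' -> mono s s' ->
  vote_facts lg s b -> vote_facts lg' s' b.
Proof.
move=> Hs [h1 h2 h3]; case: b => // p o k v t [a1 a2 a3 a4 a5]; split=> //.
- exact: valid_prop_sub Hs a1.
- exact: leq_trans h1.
- exact: leq_trans h2.
Qed.

Lemma inv_gen lg lg' i s s' : inv_i lg i s -> mono s s' -> sub lg lg' ->
  (forall b, List.In (i, MVote b) lg' -> List.In (i, MVote b) lg) ->
  (forall m q, List.In (i, MTimeout m q) lg' -> List.In (i, MTimeout m q) lg) ->
  inv_i lg' i s'.
Proof.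
move=> [I1 I2 I3 I4] Hm Hs HV HT; split.
- by move=> b /HV /I1; apply: vote_facts_mono.
- by move=> b1 b2 /HV ? /HV ?; apply: I2.
- move=> m q /HT /I3; case: Hm => _ _ ?; lia.
- move=> p o k v t m q /HV h1 /HT h2 h3; exact: I4 h1 h2 h3.
Qed.

Lemma sub_cons (lg : LG) x : sub lg (x :: lg).
Proof. by move=> y Hy; right. Qed.

Lemma sub_refl (lg : LG) : sub lg lg.
Proof. by []. Qed.

Lemma in_cons_other (lg : LG) (x : replica * msg) i m :
  i != x.1 -> List.In (i, m) (x :: lg) -> List.In (i, m) lg.
Proof. by move=> Hne [E|//]; rewrite E /= eqxx in Hne. Qed.

Lemma upd_eq (g : replica -> lstate) i s j : upd g i s j = if j == i then s else g j.
Proof. by []. Qed.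

Lemma step_inv gs gs' : Inv gs -> step honest gs gs' -> Inv gs'.
Proof.
move=> + Hst; case: Hst => [g lg i b Hi _ | g lg i t Hi _ | g lg i Hi Hlt | g lg i txn Hi _ _
          | g lg i B Hi _ Hv Hseen Hok | g lg i B Hi _ Hv Hseen Hok] HI j Hj /=;
  have := HI j Hj; rewrite /= upd_eq; case: eqP => [->{j Hj}|/eqP Hne] Hinv.
- apply: inv_gen Hinv (mono_see_qc _ _) (@sub_refl _) _ _ => //.
- apply: inv_gen Hinv (mono_refl _) (@sub_refl _) _ _ => //.
- apply: inv_gen Hinv (mono_see_tc _ _) (@sub_refl _) _ _ => //.
- apply: inv_gen Hinv (mono_refl _) (@sub_refl _) _ _ => //.
-
  case: Hinv => I1 I2 I3 I4.
  have Hm : mono (g i) (set_stop (g i)) by split=> //=; apply: ltnW.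
  have HV : forall b, List.In (i, MVote b) ((i, MTimeout (r_cur (g i)) (qc_high (g i))) :: lg) ->
     List.In (i, MVote b) lg by move=> b [[]|].
  split.
  + by move=> b /HV /I1; apply: vote_facts_mono (@sub_cons _ _) Hm.
  + by move=> b1 b2 /HV ? /HV ?; apply: I2.
  + move=> m q /= [[-> _] //|/I3]; lia.
  + move=> p o k v t m q /HV Hvote [[<- <-]|HT] Hk; last exact: I4 Hvote HT Hk.
    by have := I1 _ Hvote; case.
- apply: inv_gen Hinv (mono_refl _) (@sub_cons _ _) _ _.
  + by move=> b; apply: in_cons_other; exact: Hne.
  + by move=> m q; apply: in_cons_other; exact: Hne.
-
  have Hm : mono (g i) (set_prop (g i)) by [].
  apply: inv_gen Hinv Hm (@sub_cons _ _) _ _.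
  + by move=> b [[]|].
  + by move=> m q [[]|].
- apply: inv_gen Hinv (mono_refl _) (@sub_cons _ _) _ _.
  + by move=> b; apply: in_cons_other; exact: Hne.
  + by move=> m q; apply: in_cons_other; exact: Hne.
-
  case: Hinv => I1 I2 I3 I4.
  case: B Hv Hseen Hok => [//|p o k v t] Hv Hseen Hok.
  case: (proc_facts (g i) p o k v t) => P1 P2 P3 P4.
  move: Hok; set s := proc_prop (g i) _ => -[Ek Ev Hrv Hrs Hrule].
  rewrite -/s in P1 P2 P3 P4. have Hms : mono (g i) s by apply: mono_proc. clearbody s.
  have Hold : forall b, List.In (i, MVote b) lg -> bround b < k.
    move=> b /I1; case: b => // p' o' k' v' t' [_ ? _ _ _] /=; lia.
  have Hm : mono (g i) (set_vote s k).
    case: Hms => ? ? ?; split=> /=; lia.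
  split.
  + move=> b /= [[<-]|Hb]; last by apply: vote_facts_mono (@sub_cons _ _) Hm (I1 _ Hb).
    split; [exact: valid_prop_sub (@sub_cons _ _) Hv | by [] | lia | exact: P4 | exact: Hrule].
  + move=> b1 b2 /= [[<-]|H1] [[<-]|H2] //= E.
    * by have := Hold _ H2; rewrite -E /=; lia.
    * by have := Hold _ H1; rewrite E /=; lia.
    * exact: I2.
  + move=> m q /= [E|/I3]; first by inversion E.
    rewrite /= P2; lia.
  + move=> p' o' k' v' t' m q /= [[<- _ <- _ _]|HV] [E|HT] Hk; try by inversion E.
    * have := I3 _ _ HT; lia.
    * exact: I4 HV HT Hk.
- apply: inv_gen Hinv (mono_refl _) (@sub_cons _ _) _ _.
  + by move=> b; apply: in_cons_other; exact: Hne.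
  + by move=> m q; apply: in_cons_other; exact: Hne.
- apply: inv_gen Hinv (mono_proc _ _) (@sub_refl _) _ _ => //.
- apply: inv_gen Hinv (mono_refl _) (@sub_refl _) _ _ => //.
Qed.

Lemma reach_inv gs : reachable honest gs -> Inv gs.
Proof.
elim=> [|gs0 gs1 _ IH Hs]; last exact: step_inv IH Hs.
by move=> i _; split=> //=.
Qed.


Lemma in_fst (hs : seq (replica * block)) j :
  j \in map fst hs -> exists q, List.In (j, q) hs.
Proof.
elim: hs => //= [[a b] hs IH]; rewrite inE => /orP [/eqP ->|/IH [q Hq]].
  by exists b; left.
by exists q; right.
Qed.

Lemma le_mhr m (hs : seq (replica * block)) j q :
  List.In (j, q) hs -> bround q <= max_high_round (TC m hs).
Proof.
rewrite /max_high_round /=; elim: hs => //= x hs IH [->|/IH H] /=.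
  exact: leq_maxl.
exact: leq_trans H (leq_maxr _ _).
Qed.

Lemma vote_round lg s (b : block) : vote_facts lg s b -> 0 < bround b.
Proof. by case: b => // p o k v t [_ _ ? _ _] /=; lia. Qed.

Lemma honest_voter gs (C : block) (SC : {set replica}) : Inv gs -> #|~: honest| <= f ->
  2 * f + 1 <= #|SC| -> (forall i, i \in SC -> has_vote_share honest (log gs) i C) ->
  exists i, [/\ i \in honest, i \in SC & List.In (i, MVote C) (log gs)].
Proof.
move=> HI Hf H1 H2.
have [|x [Hx _ Hxh]] := @meet SC SC (~: honest). have En : nrep f = (3 * f).+1 := erefl; lia.
rewrite inE negbK in Hxh.
case: (H2 x Hx) => [Hn|HV]; first by rewrite Hxh in Hn.
by exists x.
Qed.

Lemma uniq_qc gs (C D : block) : Inv gs -> #|~: honest| <= f ->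
  valid_qc honest (log gs) C -> valid_qc honest (log gs) D -> bround C = bround D -> C = D.
Proof.
move=> HI Hf [->|[SC [hC1 hC2]]] [->|[SD [hD1 hD2]]] E //.
- have [i [Hi _ HV]] := honest_voter HI Hf hD1 hD2.
  case: (HI i Hi) => I1 _ _ _; have := vote_round (I1 _ HV); rewrite -E /=; lia.
- have [i [Hi _ HV]] := honest_voter HI Hf hC1 hC2.
  case: (HI i Hi) => I1 _ _ _; have := vote_round (I1 _ HV); rewrite E /=; lia.
- have [|x [HxC HxD Hxh]] := @meet SC SD (~: honest). have En : nrep f = (3 * f).+1 := erefl; lia.
  rewrite inE negbK in Hxh.
  case: (hC2 x HxC) => [Hn|HV1]; first by rewrite Hxh in Hn.
  case: (hD2 x HxD) => [Hn|HV2]; first by rewrite Hxh in Hn.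
  case: (HI x Hxh) => _ I2 _ _; exact: I2 HV1 HV2 E.
Qed.

Lemma locked gs (B : block) tc v txn (S : {set replica}) :
  Inv gs -> #|~: honest| <= f -> f + 1 <= #|S| -> S \subset honest ->
  (forall i, i \in S -> List.In (i, MVote (Blk B tc (bround B).+1 v txn)) (log gs)) ->
  forall k (C : block), valid_qc honest (log gs) C -> bround C = k -> bround B <= k ->
  extends B C.
Proof.
move=> HI Hf HS Hsub Hvot.
have [i0 Hi0] : exists i, i \in S by apply/set0Pn; rewrite -card_gt0; lia.
have Hi0h : i0 \in honest by apply: (subsetP Hsub).
have HB : valid_qc honest (log gs) B.
  by case: (HI i0 Hi0h) => I1 _ _ _; case: (I1 _ (Hvot _ Hi0)) => [[]].
elim/ltn_ind => k IH C HC Ek Hle.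
case: (eqVneq k (bround B)) => [Ek'|Hne].
  by rewrite (uniq_qc HI Hf HC HB (etrans Ek Ek')); constructor.
have Hlt : bround B < k by rewrite ltn_neqAle eq_sym Hne Hle.
case: HC => [CG|[SC [h1 h2]]]; first by move: Ek; rewrite CG /=; lia.
have [|j [HjC HjS _]] := @meet SC S set0. have En : nrep f = (3 * f).+1 := erefl; rewrite cards0; lia.
have Hjh : j \in honest by apply: (subsetP Hsub).
case: (h2 j HjC) => [Hn|VC]; first by rewrite Hjh in Hn.
case: (HI j Hjh) => I1 I2 I3 I4.
have HF := I1 _ VC.
case: C Ek h2 VC HF => [//|p o k' v' t'] /= Ek h2 VC [Hvp _ Hpk _ Hrule].
subst k'.
case: (eqVneq k (bround B).+1) => [Ek1|Hne1].
  have := I2 _ _ VC (Hvot j HjS); rewrite /= Ek1 => E.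
  by rewrite (E erefl); constructor; constructor.
case: Hvp => Hp Ht.
have IHp : bround B <= bround p -> extends B (Blk p o k v' t').
  by move=> Hle'; constructor; apply: (IH (bround p) Hpk p Hp erefl Hle').
case: Hrule => [Ek1|[t [Eo Ekt Hmh]]].
  apply: IHp; lia.
apply: IHp.
have := Ht t Eo; case: t Eo Ekt Hmh => m hs Eo /= Ekt Hmh [Hsz [Huq Hall]].
set T := [set x | x \in map fst hs].
have HT : #|T| = 2 * f + 1.
  rewrite /T cardsE -Hsz -(size_map fst); exact/card_uniqP.
have [|j' [Hj'T Hj'S _]] := @meet T S set0. have En : nrep f = (3 * f).+1 := erefl; rewrite cards0 HT; apply: (@leq_trans (2*f+1 + (f+1))); [lia | rewrite leq_add2l; exact: HS].
have Hj'h : j' \in honest by apply: (subsetP Hsub).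
move: Hj'T; rewrite inE => /in_fst [q Hq].
case: (Hall _ _ Hq) => _ _ [Hn|HTo]; first by rewrite Hj'h in Hn.
case: (HI j' Hj'h) => _ _ _ I4'.
have := I4' _ _ _ _ _ _ _ (Hvot j' Hj'S) HTo.
have := le_mhr m Hq.
move=> H1 H2; have := H2 ltac:(lia). lia.
Qed.

End Pf.

Theorem theorem2 (f : nat) (Txn : Type) (honest : {set 'I_(nrep f)})
    (gs : gstate f Txn) (B B' : block f Txn) :
  #|~: honest| <= f ->
  reachable honest gs ->
  globally_direct_committed honest gs B ->
  globally_direct_committed honest gs B' ->
  extends B B' \/ extends B' B.
Proof.
move=> Hf Hr [tc [v [txn [S [HS Hsub Hvot]]]]] [tc' [v' [txn' [S' [HS' Hsub' Hvot']]]]].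
have HI := reach_inv Hr.
have vq : forall (X : block f Txn) tc v txn (S : {set 'I_(nrep f)}), f + 1 <= #|S| -> S \subset honest ->
  (forall i, i \in S -> List.In (i, MVote (Blk X tc (bround X).+1 v txn)) (log gs)) ->
  valid_qc honest (log gs) X.
  move=> X tc0 v0 txn0 S0 H1 H2 H3.
  have [i0 Hi0] : exists i, i \in S0 by apply/set0Pn; rewrite -card_gt0; lia.
  have Hi0h : i0 \in honest by apply: (subsetP H2).
  by case: (HI i0 Hi0h) => I1 _ _ _; case: (I1 _ (H3 _ Hi0)) => [[]].
case: (leqP (bround B) (bround B')) => Hle.
  left; exact: (locked HI Hf HS Hsub Hvot (vq _ _ _ _ _ HS' Hsub' Hvot') erefl Hle).
right; apply: (locked HI Hf HS' Hsub' Hvot' (vq _ _ _ _ _ HS Hsub Hvot) erefl); lia.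
Qed.
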